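(* Let $G(A,B)$ be a matching-covered bipartite graph. Then $G(A,B)$ has an equivalent class if and only if $G(A,B)$ has a 2-edge-cut which separates $G(A,B)$ into two balanced components.
   Context: A matching-covered graph is a connected graph with a perfect matching in which every edge lies in some perfect matching. Two edges of a matching-covered graph $G$ are equivalent if every perfect matching of $G$ either contains both of them or contains neither. An equivalent class of $G$ is a set $K\subseteq E(G)$ with at least two edges such that any two edges of $K$ are equivalent. A 2-edge-cut separating $G$ into two components is a set $S$ of two edges such that $G\setminus S$ has exactly two components and $S$ consists of the edges between them. A bipartite component with bipartition $(A',B')$ is balanced if $|A'|=|B'|$. *)

(* Defs.v *)
(* Finite simple graphs on a finType T given by a
   symmetric irreflexive relation e; edges are 2-element vertex sets. *)
From mathcomp Require Import all_boot.
Set Implicit Arguments. Unset Strict Implicit. Unset Printing Implicit Defensive.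

Section Graphs.
Variable T : finType.

Definition simple_graph (e : rel T) : Prop := symmetric e /\ irreflexive e.

Definition edges (e : rel T) : {set {set T}} :=
  [set [set x; y] | x in T, y in T & e x y].

Definition connected_graph (e : rel T) : Prop := forall x y : T, connect e x y.

Definition perfect_matching (e : rel T) (M : {set {set T}}) : Prop :=
  M \subset edges e /\ forall v : T, #|[set f in M | v \in f]| = 1.

Definition matching_covered (e : rel T) : Prop :=
  connected_graph e /\ (exists M, perfect_matching e M) /\
  forall f, f \in edges e -> exists M, perfect_matching e M /\ f \in M.

Definition bipartite_with (e : rel T) (A : {set T}) : Prop :=
  forall x y, e x y -> (x \in A) != (y \in A).

Definition equivalent_edges (e : rel T) (f g : {set T}) : Prop :=
  forall M, perfect_matching e M -> (f \in M) = (g \in M).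

Definition equivalent_class (e : rel T) (K : {set {set T}}) : Prop :=
  K \subset edges e /\ 2 <= #|K| /\
  forall f g, f \in K -> g \in K -> equivalent_edges e f g.

Definition delete_edges (e : rel T) (S : {set {set T}}) : rel T :=
  fun x y => e x y && ([set x; y] \notin S).

Definition cut_edges (e : rel T) (X : {set T}) : {set {set T}} :=
  [set f in edges e | [exists x in X, exists y in ~: X, f == [set x; y]]].

Definition two_edge_cut_sep (e : rel T) (S : {set {set T}}) (X : {set T}) : Prop :=
  S \subset edges e /\ #|S| = 2 /\
  X != set0 /\ ~: X != set0 /\
  (forall x y, connect (delete_edges e S) x y <-> ((x \in X) = (y \in X))) /\
  S = cut_edges e X.

Definition balanced (A C : {set T}) : Prop := #|C :&: A| = #|C :&: ~: A|.

End Graphs.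

(* Main.v *)
Require Import Defs.
From mathcomp Require Import all_boot.
From mathcomp Require Import zify.
Set Implicit Arguments. Unset Strict Implicit. Unset Printing Implicit Defensive.

Section Main.
Variable T : finType.
Variable e : rel T.
Variable A : {set T}.
Hypothesis esy : symmetric e.
Hypothesis bip : bipartite_with e A.

Lemma set2_eq (a b c d : T) : [set a; b] = [set c; d] ->
  (a = c /\ b = d) \/ (a = d /\ b = c).
Proof.
move=> E.
have ha : a \in [set c; d] by rewrite -E set21.
have hb : b \in [set c; d] by rewrite -E set22.
have hc : c \in [set a; b] by rewrite E set21.
have hd : d \in [set a; b] by rewrite E set22.
case/set2P: ha => ha; case/set2P: hb => hb; subst; auto;
case/set2P: hc => hc; case/set2P: hd => hd; subst; auto.
Qed.

Lemma set2_inj (a b c : T) : [set a; b] = [set a; c] -> b = c.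
Proof. by case/set2_eq => [[_ ->]|[-> ->]]. Qed.

Lemma in_edges x y : e x y -> [set x; y] \in edges e.
Proof. by move=> exy; apply/imset2P; exists x y; rewrite ?inE. Qed.

Lemma edgesP h : h \in edges e -> exists x y, e x y /\ h = [set x; y].
Proof. by case/imset2P => x y _; rewrite inE => exy ->; exists x, y. Qed.

Lemma edge_sym_set x y h : h = [set x; y] -> h \in edges e -> e x y.
Proof.
move=> -> /edgesP [u [v [euv E]]].
by case/set2_eq: E => [[-> ->]|[-> ->]] //; rewrite esy.
Qed.

Definition is_partner (N : {set {set T}}) (q : T -> T) :=
  [/\ forall v, q (q v) = v, forall v, e v (q v) &
      forall u v, [set u; v] \in N <-> v = q u].

Lemma pm_partner N : perfect_matching e N -> exists q, is_partner N q.
Proof.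
case=> sub card1.
have ex v : exists w, [set v; w] \in N.
  have/eqP/cards1P[h hE] := card1 v.
  have: h \in [set h0 in N | v \in h0] by rewrite hE set11.
  rewrite inE => /andP[hN vh].
  have/edgesP [x [y [_ hxy]]] := subsetP sub _ hN; subst h.
  by case/set2P: vh => ->; [exists y | exists x; rewrite setUC].
have uniqN v w w' : [set v; w] \in N -> [set v; w'] \in N -> w = w'.
  move=> h1 h2; have/eqP/cards1P[h hE] := card1 v.
  have: [set v; w] \in [set h0 in N | v \in h0] by rewrite inE h1 set21.
  have: [set v; w'] \in [set h0 in N | v \in h0] by rewrite inE h2 set21.
  rewrite hE !inE => /eqP E1 /eqP E2; apply: (@set2_inj v); by rewrite E1 E2.
pose q v := odflt v [pick w | [set v; w] \in N].
have qP v : [set v; q v] \in N.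
  rewrite /q; case: pickP => [w //|none].
  by case: (ex v) => w; rewrite none.
have qinv v : q (q v) = v.
  by apply: (uniqN (q v)); [exact: qP | rewrite setUC; exact: qP].
exists q; split => //.
  move=> v; apply: (edge_sym_set (erefl _)); exact: subsetP sub _ (qP v).
move=> u v; split; first by move=> h; apply: (uniqN u) h (qP u).
by move=> ->.
Qed.

Definition mset (q : T -> T) : {set {set T}} := [set [set x; q x] | x : T].

Lemma partner_pm q : (forall v, q (q v) = v) -> (forall v, e v (q v)) ->
  perfect_matching e (mset q) /\ is_partner (mset q) q.
Proof.
move=> qinv qe.
have memq u v : [set u; v] \in mset q <-> v = q u.
  split; last by move=> ->; apply: imset_f.
  case/imsetP => x _ /set2_eq [[-> ->] //|[-> ->]]; by rewrite qinv.
split; last by split.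
split.
  by apply/subsetP => h /imsetP [x _ ->]; apply: in_edges.
move=> v; apply/eqP/cards1P; exists [set v; q v].
apply/setP => h; rewrite !inE; apply/andP/eqP.
  case=> /imsetP [x _ ->]; case/set2P => ->; first by [].
  by rewrite qinv setUC.
by move=> ->; split; [apply/memq | rewrite set21].
Qed.


Definition exA (q : T -> T) (X : {set T}) := X :&: A :\: [set v | q v \in X].
Definition exB (q : T -> T) (X : {set T}) := X :&: ~: A :\: [set v | q v \in X].

Lemma count_ex q X : (forall v, q (q v) = v) -> (forall v, e v (q v)) ->
  #|exA q X| + #|X :&: ~: A| = #|exB q X| + #|X :&: A|.
Proof.
move=> qinv qe.
have qinj : injective q := can_inj qinv.
have bq v : (q v \in A) = ~~ (v \in A).
  by have := bip (qe v); case: (v \in A); case: (q v \in A).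
rewrite -(cardsID [set v | q v \in X] (X :&: A)).
rewrite -(cardsID [set v | q v \in X] (X :&: ~: A)).
rewrite /exA /exB.
suff ->: #|X :&: ~: A :&: [set v | q v \in X]| = #|X :&: A :&: [set v | q v \in X]|.
  lia.
rewrite -(card_imset _ qinj); apply: eq_card => b.
apply/imsetP/idP.
  case=> a; rewrite !inE => /andP[/andP[aX aA] qaX] ->.
  by rewrite qaX bq aA qinv aX.
rewrite !inE => /andP[/andP[bX bA] qbX]; exists (q b); last by rewrite qinv.
by rewrite !inE qbX bq bA qinv bX.
Qed.

Lemma conn_closed (R : rel T) (Z : {set T}) x y :
  (forall u v, R u v -> u \in Z -> v \in Z) -> connect R x y -> x \in Z -> y \in Z.
Proof.
move=> cl /connectP [s ps ->]; elim: s x ps => //= z s IH x /andP[rxz ps] xZ.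
exact: IH ps (cl _ _ rxz xZ).
Qed.

Lemma conn_pred (R : rel T) x y : connect R x y -> x != y ->
  exists2 u, connect R x u & R u y.
Proof.
case/connectP => s; elim/last_ind: s => [|s z _] /=; first by move=> _ ->; rewrite eqxx.
rewrite rcons_path last_rcons => /andP[ps rz] -> _.
by exists (last x s) => //; apply/connectP; exists s.
Qed.



Lemma backward S X0 : two_edge_cut_sep e S X0 -> balanced A X0 -> equivalent_class e S.
Proof.
case=> Ssub [S2 [_ [_ [_ Scut]]]] bal.
split => //; split; first by rewrite S2.
have main f g N : f \in S -> g \in S -> f != g -> perfect_matching e N ->
    f \in N -> g \in N.
  move=> fS gS fg pmN fN; apply/negPn/negP => gN.
  have [q [qinv qe qm]] := pm_partner pmN.
  have Sfg : S = [set f; g].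
    apply/eqP; rewrite eq_sym eqEcard S2 cards2 fg andbT.
    by apply/subsetP => h; rewrite in_set2 => /orP [] /eqP ->.
  move: (fS); rewrite Scut inE => /andP [_ /existsP [x /andP [xX /existsP [y /andP [yX /eqP fxy]]]]].
  rewrite in_setC in yX.
  have yq : y = q x by apply/qm; rewrite -fxy.
  have sub v : v \in X0 -> q v \notin X0 -> v = x.
    move=> vX qvX.
    have : [set v; q v] \in S.
      rewrite Scut inE in_edges //; apply/existsP; exists v; rewrite vX /=.
      by apply/existsP; exists (q v); rewrite in_setC qvX eqxx.
    rewrite Sfg in_set2 => /orP [] /eqP E.
      rewrite fxy in E; case/set2_eq: E => [[-> //]|[Ev _]].
      by move: vX; rewrite Ev (negbTE yX).
    by exfalso; move/negP: gN; apply; rewrite -E; apply/qm.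
  have cq := count_ex X0 qinv qe.
  rewrite /balanced in bal; rewrite bal in cq.
  have qxX : q x \notin X0 by rewrite -yq.
  case xA: (x \in A).
    have h1 : x \in exA q X0 by rewrite /exA in_setD in_setI xX xA inE qxX.
    have h0 : #|exB q X0| = 0.
      apply: eq_card0 => b; rewrite /exB in_setD in_setI in_setC inE.
      apply/negP => /and3P [qbX bX bA]; have Eb := sub b bX qbX.
      by move: bA; rewrite Eb xA.
    have : 0 < #|exA q X0| by apply/card_gt0P; exists x.
    by move: cq; rewrite h0; simpl; lia.
  have h1 : x \in exB q X0 by rewrite /exB in_setD in_setI in_setC xX xA inE qxX.
  have h0 : #|exA q X0| = 0.
    apply: eq_card0 => b; rewrite /exA in_setD in_setI inE.
    apply/negP => /and3P [qbX bX bA]; have Eb := sub b bX qbX.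
    by move: bA; rewrite Eb xA.
  have : 0 < #|exB q X0| by apply/card_gt0P; exists x.
  by move: cq; rewrite h0; simpl; lia.
move=> f g fS gS N pmN.
case: (eqVneq f g) => [-> //|fg].
apply/idP/idP; first exact: main.
by apply: main => //; rewrite eq_sym.
Qed.

Hypothesis mc : forall h, h \in edges e -> exists N, perfect_matching e N /\ h \in N.
Hypothesis conn : forall x y, connect e x y.

Lemma mc_q u v : e u v -> exists q, [/\ forall x, q (q x) = x, forall x, e x (q x) & q u = v].
Proof.
move=> euv; have [N [pmN hN]] := mc (in_edges euv).
have [q [qinv qe qm]] := pm_partner pmN.
by exists q; split => //; apply/esym/qm.
Qed.

Section Part.
Variables (p : T -> T) (a1 a2 : T).
Hypothesis pinv : forall v, p (p v) = v.
Hypothesis pe : forall v, e v (p v).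
Hypothesis a1A : a1 \in A.
Hypothesis a2A : a2 \in A.
Hypothesis a12 : a1 != a2.
Hypothesis eqv : forall N, perfect_matching e N ->
  ([set a1; p a1] \in N) = ([set a2; p a2] \in N).

Lemma eqv_q q : (forall v, q (q v) = v) -> (forall v, e v (q v)) ->
  (q a1 == p a1) = (q a2 == p a2).
Proof.
move=> qinv qe; have [pm [_ _ qm]] := partner_pm qinv qe.
have E x : ([set x; p x] \in mset q) = (q x == p x).
  by apply/idP/eqP => [/qm -> //|h]; apply/qm; rewrite h.
by rewrite -!E; exact: eqv pm.
Qed.


Definition O : rel T := fun u v => e u v && (if u \in A then v != p u else v == p u).
Definition O' : rel T := fun u v => [&& O u v, v != a1 & v != a2].
Definition O2 : rel T := fun u v => O u v && (v != a2).
Definition X : {set T} := [set v | connect O' a1 v].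

Lemma pinj : injective p. Proof. exact: can_inj pinv. Qed.
Lemma bp v : (p v \in A) = ~~ (v \in A).
Proof. by have := bip (pe v); case: (v \in A); case: (p v \in A). Qed.
Lemma bE u v : e u v -> (v \in A) = ~~ (u \in A).
Proof. by move/bip; case: (v \in A); case: (u \in A). Qed.

Lemma OA x y : O x y -> x \in A -> (y \notin A) /\ (y != p x).
Proof. by case/andP => exy; move=> + xA; rewrite xA => ?; rewrite (bE exy) xA. Qed.
Lemma OB x y : O x y -> x \notin A -> y = p x.
Proof. by case/andP => exy; move=> + /negbTE xA; rewrite xA => /eqP. Qed.

Lemma C1 : p a1 \notin X.
Proof.
rewrite inE; apply/negP => /connectP [s ps lst].
move: lst; case: (shortenP ps) => s' ps' us' _ lst.
pose c := a1 :: s'.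
have cyc : cycle O2 c.
  rewrite /c /= rcons_path -lst; apply/andP; split.
    by apply: sub_path ps' => u v /and3P [? _ ?]; apply/andP.
  rewrite /O2 /O eq_sym a12 andbT esy pe bp a1A /= pinv //.
have uc : uniq c by [].
have nO v : v \in c -> O v (next c v) by move=> vc; case/andP: (next_cycle cyc vc).
have pO v : v \in c -> O (prev c v) v by move=> vc; case/andP: (prev_cycle cyc vc).
pose p2 v := if v \in c then (if v \in A then next c v else prev c v) else p v.
have p2inv v : p2 (p2 v) = v.
  rewrite /p2; case vc: (v \in c).
    case vA: (v \in A).
      have [wA _] := OA (nO _ vc) vA.
      by rewrite mem_next vc (negbTE wA) prev_next.
    have wA : prev c v \in A.
      apply/negPn/negP => wA; have := OB (pO _ vc) wA.
      by move=> E; move: vA; rewrite E bp wA.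
    by rewrite mem_prev vc wA next_prev.
  have pvc : p v \notin c.
    apply/negP => pvc; case pvA: (p v \in A).
      have uc' : prev c (p v) \in c by rewrite mem_prev.
      case uA: (prev c (p v) \in A).
        by have [+ _] := OA (pO _ pvc) uA; rewrite pvA.
      have E := OB (pO _ pvc) (negbT uA).
      by move: uc'; rewrite -(pinj E) vc.
    have E := OB (nO _ pvc) (negbT pvA).
    by move: (pvc); rewrite -mem_next E pinv vc.
  by rewrite (negbTE pvc) pinv.
have p2e v : e v (p2 v).
  rewrite /p2; case vc: (v \in c); last exact: pe.
  case: (v \in A); first by case/andP: (nO _ vc).
  by rewrite esy; case/andP: (pO _ vc).
have := eqv_q p2inv p2e.
have -> : p2 a1 == p a1 = false.
  rewrite /p2 mem_head a1A; apply/negbTE.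
  by have [_ ->] := OA (nO _ (mem_head a1 s')) a1A.
have a2c : a2 \notin c.
  by apply/negP => a2c; have := prev_cycle cyc a2c; rewrite /O2 eqxx andbF.
by rewrite /p2 (negbTE a2c) eqxx.
Qed.

Lemma a1X : a1 \in X. Proof. by rewrite inE connect0. Qed.

Lemma a2X : a2 \notin X.
Proof.
rewrite inE; apply/negP => /conn_pred /(_ a12) [u _].
by rewrite /O' eqxx !andbF.
Qed.

Lemma XO' u v : u \in X -> O' u v -> v \in X.
Proof. rewrite !inE => uX ruv; apply: connect_trans uX (connect1 ruv). Qed.

Lemma F2 a : a \in X -> a \in A -> a != a1 -> p a \in X.
Proof.
move=> aX aA na; have na' : a1 != a by rewrite eq_sym.
move: (aX); rewrite inE => /conn_pred /(_ na') [u uX].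
case/and3P => ou _ _.
case uA: (u \in A); first by have [+ _] := OA ou uA; rewrite aA.
by have -> := OB ou (negbT uA); rewrite pinv inE.
Qed.

Lemma F3 b : b \in X -> b \notin A -> b != p a2 -> p b \in X.
Proof.
move=> bX bA nb; apply: (XO' bX).
rewrite /O' /O pe (negbTE bA) eqxx /=; apply/andP; split.
  by apply/eqP => E; move: C1; rewrite -E pinv bX.
by apply/eqP => E; move: nb; rewrite -E pinv eqxx.
Qed.

Lemma F4 a w : a \in X -> a \in A -> e a w -> w != p a -> w \in X.
Proof.
move=> aX aA eaw nw; apply: (XO' aX).
have wA : w \notin A by rewrite (bE eaw) aA.
rewrite /O' /O eaw aA nw /=.
by apply/andP; split; apply/eqP => E; move: wA; rewrite E ?a1A ?a2A.
Qed.

Lemma exA_card q : (forall v, q (q v) = v) -> (forall v, e v (q v)) ->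
  #|exA q X| = (q a1 == p a1).
Proof.
move=> qinv qe.
have E : exA q X = if q a1 == p a1 then [set a1] else set0.
  apply/setP => a; rewrite /exA !inE.
  apply/idP/idP.
    case/andP => qaX /andP [aX aA].
    have {}aX : a \in X by rewrite inE.
    have {}qaX : q a \notin X by rewrite inE.
    have qa : q a = p a.
      by apply/eqP/negPn/negP => nq; move: qaX; rewrite (F4 aX aA (qe a) nq).
    have aa : a = a1.
      by apply/eqP/negPn/negP => na; move: qaX; rewrite qa (F2 aX aA na).
    by subst a; rewrite qa eqxx inE.
  case: ifP => [/eqP qa | _]; last by rewrite inE.
  rewrite inE => /eqP ->; rewrite qa a1A andbT; apply/andP; split.
    by have := C1; rewrite inE.
  by have := a1X; rewrite inE.
by rewrite E; case: ifP => _; rewrite ?cards1 ?cards0.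
Qed.

Lemma q0_ex : exists q, [/\ forall x, q (q x) = x, forall x, e x (q x) & q a1 != p a1].
Proof.
have a2Z : a2 \notin [set a1; p a1].
  by rewrite !inE negb_or eq_sym a12 /=; apply/eqP => E; move: a2A; rewrite E bp a1A.
case: (pickP [pred w | e a1 w && (w != p a1)]) => [w /andP [ew nw] | n1].
  have [q [qinv qe qw]] := mc_q ew.
  by exists q; split => //; rewrite qw.
case: (pickP [pred w | e (p a1) w && (w != a1)]) => [w /andP [ew nw] | n2].
  have [q [qinv qe qw]] := mc_q ew.
  exists q; split => //; apply/eqP => E; move: nw; by rewrite -qw -E qinv eqxx.
exfalso; move/negP: a2Z; apply.
apply: (conn_closed _ (conn a1 a2)); last by rewrite set21.
move=> u v euv; rewrite !inE => /orP [] /eqP E; subst u.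
  by have := n1 v; rewrite /= euv /= => /negbFE ->; rewrite orbT.
by have := n2 v; rewrite /= euv /= => /negbFE ->.
Qed.

Lemma part_main : [/\ p a2 \in X, balanced A X,
  (forall u v, e u v -> u \in X -> v \notin X ->
     [set u; v] \in [set [set a1; p a1]; [set a2; p a2]]) &
  (forall x, x \in X ->
     connect (delete_edges e [set [set a1; p a1]; [set a2; p a2]]) a1 x)].
Proof.
have exBp : exB p X \subset [set p a2].
  apply/subsetP => b; rewrite /exB in_setD in_setI in_setC => /andP [pbX /andP [bX bA]].
  rewrite inE; apply/negPn/negP => nb.
  by move: pbX; rewrite inE (F3 bX bA nb).
have cp := count_ex X pinv pe; rewrite exA_card // eqxx in cp.
have [q0 [q0inv q0e q0n]] := q0_ex.
have c0 := count_ex X q0inv q0e; rewrite exA_card // (negbTE q0n) in c0.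
have le1 : #|exB p X| <= 1 by rewrite -(cards1 (p a2)); apply: subset_leq_card.
have ex1 : #|exB p X| = 1 by move: cp c0 le1; simpl; lia.
have bal : #|X :&: A| = #|X :&: ~: A| by move: cp ex1; simpl; lia.
have b2X : p a2 \in X.
  have : 0 < #|exB p X| by rewrite ex1.
  case/card_gt0P => b bE; have := subsetP exBp _ bE; rewrite inE => /eqP Eb.
  by move: bE; rewrite Eb /exB in_setD in_setI => /andP [_ /andP [-> _]].
have Bside q b : (forall v, q (q v) = v) -> (forall v, e v (q v)) ->
    b \in X -> b \notin A -> q b \notin X -> b = p a2 /\ q b = a2.
  move=> qinv qe bX bA qbX.
  have cq := count_ex X qinv qe; rewrite exA_card // bal in cq.
  have bE : b \in exB q X by rewrite /exB in_setD in_setI in_setC bX bA inE qbX.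
  case qa: (q a1 == p a1) cq => /= cq.
    have : q a2 == p a2 by rewrite -(eqv_q qinv qe) qa.
    move=> /eqP qa2.
    have b2E : p a2 \in exB q X.
      by rewrite /exB in_setD in_setI in_setC b2X bp a2A inE -qa2 qinv a2X.
    have /cards1P [x xE] : #|exB q X| == 1 by apply/eqP; move: cq; simpl; lia.
    move: bE b2E; rewrite xE !inE => /eqP -> /eqP <-; split => //.
    by rewrite -qa2 qinv.
  have : #|exB q X| = 0 by move: cq; simpl; lia.
  by move/card0_eq/(_ b); rewrite bE.
split => //.
  move=> u v euv uX vX; case uA: (u \in A).
    have vp : v = p u.
      by apply/eqP/negPn/negP => nv; move: vX; rewrite (F4 uX uA euv nv).
    have ua : u = a1.
      by apply/eqP/negPn/negP => na; move: vX; rewrite vp (F2 uX uA na).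
    by rewrite vp ua set21.
  have [q [qinv qe qu]] := mc_q euv.
  have [|Eu qa] := Bside q u qinv qe uX (negbT uA); first by rewrite qu.
  by rewrite -qu qa Eu setUC set22.
move=> x; rewrite inE; apply: connect_sub => u v ouv; apply: connect1.
rewrite /delete_edges; case/and3P: ouv => ouv na1 na2.
case/andP: (ouv) => -> _ /=; rewrite !inE negb_or.
apply/andP; split; apply/eqP => /set2_eq [[E1 E2]|[E1 E2]]; subst.
- by case/andP: ouv => _; rewrite a1A eqxx.
- by rewrite eqxx in na1.
- by case/andP: ouv => _; rewrite a2A eqxx.
by rewrite eqxx in na2.
Qed.
End Part.

Lemma forward K : equivalent_class e K ->
  exists (S : {set {set T}}) (X0 : {set T}),
      two_edge_cut_sep e S X0 /\ balanced A X0 /\ balanced A (~: X0).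
Proof.
case=> Ksub [K2 Keq].
case/card_gt1P: K2 => f [g [fK gK fg]].
have [N [pmN fN]] := mc (subsetP Ksub _ fK).
have gN : g \in N by rewrite -(Keq _ _ fK gK _ pmN).
have [p [pinv pe pm]] := pm_partner pmN.
have orient h : h \in N -> exists2 a, a \in A & h = [set a; p a].
  move=> hN; have/edgesP [x [y [exy E]]] := subsetP (proj1 pmN) _ hN; subst h.
  have yp : y = p x by apply/pm.
  case xA: (x \in A); first by exists x; rewrite -?yp.
  exists y; first by rewrite (bE exy) xA.
  by rewrite yp pinv setUC.
have [a1 a1A Ef] := orient _ fN.
have [a2 a2A Eg] := orient _ gN.
have a12 : a1 != a2 by apply: contra fg => /eqP E; rewrite Ef Eg E.
have a21 : a2 != a1 by rewrite eq_sym.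
have eqv N' : perfect_matching e N' -> ([set a1; p a1] \in N') = ([set a2; p a2] \in N').
  by rewrite -Ef -Eg; apply: Keq.
have eqv' N' : perfect_matching e N' -> ([set a2; p a2] \in N') = ([set a1; p a1] \in N').
  by move=> ?; rewrite eqv.
have [b2X bal1 P31 P21] := part_main pinv pe a1A a2A a12 eqv.
have [b1X2 bal2 P32 P22] := part_main pinv pe a2A a1A a21 eqv'.
have a1X1 := a1X p a1 a2.
have a2X2 := a1X p a2 a1.
have b1X1 := C1 pinv pe a1A a12 eqv.
have b2X2 := C1 pinv pe a2A a21 eqv'.
have a2X1 := a2X p a12.
have a1X2 := a2X p a21.
set X1 := X p a1 a2 in b2X bal1 P31 P21 a1X1 b1X1 a2X1 *.
set X2 := X p a2 a1 in b1X2 bal2 P32 P22 a2X2 b2X2 a1X2 *.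
set S := [set [set a1; p a1]; [set a2; p a2]] in P31 P21 *.
have SC : [set [set a2; p a2]; [set a1; p a1]] = S by rewrite /S setUC.
rewrite SC in P32 P22.
set DE := delete_edges e S in P21 P22 *.
have DEsym : symmetric DE by move=> u v; rewrite /DE /delete_edges esy setUC.
have nocross u v : DE u v -> (u \in X1) = (v \in X1).
  case/andP => euv nS.
  case uX: (u \in X1); case vX: (v \in X1) => //.
    by move: nS; rewrite (P31 _ _ euv uX (negbT vX)).
  have evu : e v u by rewrite esy.
  by move: nS; rewrite setUC (P31 _ _ evu vX (negbT uX)).
have sameX x y : connect DE x y -> (x \in X1) = (y \in X1).
  case/connectP => s ps ->; elim: s x ps => //= z s IH x /andP [dxz ps].
  by rewrite (nocross _ _ dxz); exact: IH.
have cDE := sym_connect_sym DEsym.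
have X2E : X2 = ~: X1.
  have disj v : v \in X1 -> v \in X2 -> False.
    move=> vX1 vX2.
    have c1 := P21 _ vX1; have c2 := P22 _ vX2.
    have : connect DE a1 a2 by apply: connect_trans c1 _; rewrite cDE.
    by move/sameX; rewrite a1X1 (negbTE a2X1).
  have cover v : v \in X1 :|: X2.
    apply: (conn_closed _ (conn a1 v)); last by rewrite in_setU a1X1.
    move=> u w euw; rewrite !in_setU => /orP [uX | uX].
      case wX: (w \in X1) => //=.
      have wS : w \in [set u; w] by rewrite set22.
      move: (P31 _ _ euw uX (negbT wX)); rewrite !in_set2 => /orP [] /eqP E;
        rewrite E !in_set2 in wS; case/orP: wS => /eqP Ew; rewrite Ew in wX *;
        move: wX; rewrite ?a1X1 ?b1X2 ?a2X2 ?b2X ?orbT //.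
    case wX: (w \in X2); first by rewrite orbT.
    have wS : w \in [set u; w] by rewrite set22.
    move: (P32 _ _ euw uX (negbT wX)); rewrite !in_set2 => /orP [] /eqP E;
      rewrite E !in_set2 in wS; case/orP: wS => /eqP Ew; rewrite Ew in wX *;
      move: wX; rewrite ?a1X1 ?b1X2 ?a2X2 ?b2X ?orbT //.
  apply/setP => v; rewrite in_setC; case vX1: (v \in X1).
    by apply/negP => vX2; apply: (disj v).
  by have := cover v; rewrite in_setU vX1.
have fE : [set a1; p a1] \in edges e by rewrite -Ef; exact: subsetP Ksub _ fK.
have gE : [set a2; p a2] \in edges e by rewrite -Eg; exact: subsetP Ksub _ gK.
exists S, X1; split; last by split => //; rewrite -X2E.
split.
  by apply/subsetP => h; rewrite !in_set2 => /orP [] /eqP ->.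
split; first by rewrite cards2 -Ef -Eg fg.
split; first by apply/set0Pn; exists a1.
split; first by apply/set0Pn; exists (p a1); rewrite in_setC.
split.
  move=> x y; split; first exact: sameX.
  case xX: (x \in X1) => /esym yX.
    by apply: connect_trans (P21 _ yX); rewrite cDE; apply: P21.
  have xX2 : x \in X2 by rewrite X2E in_setC xX.
  have yX2 : y \in X2 by rewrite X2E in_setC yX.
  by apply: connect_trans (P22 _ yX2); rewrite cDE; apply: P22.
apply/setP => h; rewrite /cut_edges inE; apply/idP/idP.
  rewrite !in_set2 => /orP [] /eqP ->.
    rewrite fE /=; apply/existsP; exists a1; rewrite a1X1 /=.
    by apply/existsP; exists (p a1); rewrite in_setC b1X1 eqxx.
  rewrite gE /=; apply/existsP; exists (p a2); rewrite b2X /=.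
  by apply/existsP; exists a2; rewrite in_setC a2X1 setUC eqxx.
case/andP => hE /existsP [x /andP [xX /existsP [y /andP [yX /eqP hxy]]]].
rewrite in_setC in yX; rewrite hxy; apply: P31 => //.
exact: edge_sym_set hxy hE.
Qed.
End Main.

Theorem theorem5 (T : finType) (e : rel T) (A : {set T}) :
  simple_graph e -> bipartite_with e A -> matching_covered e ->
  (exists K : {set {set T}}, equivalent_class e K) <->
  (exists (S : {set {set T}}) (X : {set T}),
      two_edge_cut_sep e S X /\ balanced A X /\ balanced A (~: X)).
Proof.
move=> [esy _] bip [conn [_ mc]]; split.
  by case=> K hK; apply: (forward esy bip mc conn hK).
by case=> S [X0 [h [b1 _]]]; exists S; apply: (backward esy bip h b1).
Qed.
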